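(* Consider CMS-CU with $d$ rows and $w$ counters per row, fed with an IRM request stream, as described in the context. For every item $i\in I$ there exists a constant $B_i\ge 0$ such that for every $t\ge 1$, $$\mathbb{E}\!\left[\frac{e_i(t)}{t}\right]\le \frac{1}{w}\sum_{j\in I\setminus\{i\}}p_j\,\gamma_{i,j}+\frac{B_i}{t},$$ where $$\gamma_{i,j}=\begin{cases}1,& j\le i,\\ \min\big(\mathcal{A}(p_i-p_j)^{d-1},\,1\big),& j>i,\end{cases}$$ with $\mathcal{A}(x)=\min_{k=0,\dots,w-1}\left(\frac{\sum_{l>k}p_l}{(w-k)x}+\frac{k}{w}\right)$ for $x>0$ and $\mathcal{A}(0)=1$.
   Context: Items form the universe $I=\{1,\dots,N\}$. Requests follow the Independent Reference Model (IRM): the stream is $Z(1),Z(2),\dots$ with $Z(s)$ i.i.d. categorical random variables, $\Pr(Z(s)=i)=p_i$, $\sum_{i\in I}p_i=1$, and items are numbered so that $p_1\ge p_2\ge\dots\ge p_N$. The sketch is a $d\times w$ array of counters, initially $0$. Hash functions $h_1,\dots,h_d:I\to\{1,\dots,w\}$ are chosen independently and uniformly at random from a family of pairwise independent hash functions (so $\Pr(h_r(i)=h_r(j))=1/w$ for $i\ne j$), independently of the request stream, and are fixed during processing. $c_i^r(t)$ denotes the value at time $t$ of the counter in row $r$, column $h_r(i)$. CMS-CU update: when item $i$ is requested at time $t$, $c_i^r(t)=\max\big(c_i^r(t-1),\ \min_{f\in[d]}c_i^f(t-1)+1\big)$ for all $r\in[d]$ (other counters unchanged). $n_i(t)$ is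 the number of occurrences of item $i$ among $Z(1),\dots,Z(t)$; the estimate is $\hat n_i(t)=\min_{r\in[d]}c_i^r(t)$ and the estimation error is $e_i(t)=\hat n_i(t)-n_i(t)$. Expectations are taken over both the random choice of hash functions and the request process. *)

(* Defs.v *)
From HB Require Import structures.
From mathcomp Require Import all_boot all_order all_algebra.
From mathcomp Require Import reals.
Set Implicit Arguments. Unset Strict Implicit. Unset Printing Implicit Defensive.
Import Order.TTheory GRing.Theory Num.Theory.
Local Open Scope ring_scope.

(* Items are 'I_N (item k here = item k+1 in the paper); rows 'I_d; columns 'I_w. *)

(* minimum of d naturals (d >= 1); the max is only used as a neutral start value *)
Definition rowmax (d : nat) (f : 'I_d -> nat) : nat :=
  (\max_(r < d) f r)%N.
Definition rowmin (d : nat) (f : 'I_d -> nat) : nat :=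
  (\big[minn/rowmax f]_(r < d) f r)%N.

Definition cu_update (N d w : nat) (hs : 'I_d -> 'I_N -> 'I_w)
    (c : 'I_d -> 'I_w -> nat) (i : 'I_N) : 'I_d -> 'I_w -> nat :=
  let m := rowmin (fun f => c f (hs f i)) in
  fun r k => if k == hs r i then maxn (c r k) m.+1 else c r k.

Definition cu_counters (N d w : nat) (hs : 'I_d -> 'I_N -> 'I_w)
    (s : seq 'I_N) : 'I_d -> 'I_w -> nat :=
  foldl (cu_update hs) (fun _ _ => 0%N) s.

Definition cu_estimate (N d w : nat) (hs : 'I_d -> 'I_N -> 'I_w)
    (s : seq 'I_N) (i : 'I_N) : nat :=
  rowmin (fun r => cu_counters hs s r (hs r i)).

Definition cu_error (R : realType) (N d w : nat) (hs : 'I_d -> 'I_N -> 'I_w)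
    (s : seq 'I_N) (i : 'I_N) : R :=
  (cu_estimate hs s i)%:R - (count_mem i s)%:R.

Definition stream_prob (R : realType) (N : nat) (p : 'I_N -> R) (s : seq 'I_N) : R :=
  \prod_(x <- s) p x.

(* Pairwise independent hash family: uniform distribution on the finite index
   type H (repetitions allowed through hash), with
   Pr(h(i)=a, h(j)=b) = 1/w^2 for all i <> j and all a, b. *)
Definition pairwise_indep (R : realType) (N w : nat) (H : finType)
    (hash : H -> 'I_N -> 'I_w) : Prop :=
  forall i j : 'I_N, i != j -> forall a b : 'I_w,
    (#|[pred h : H | (hash h i == a) && (hash h j == b)]|%:R / #|H|%:R : R)
      = 1 / (w ^ 2)%:R.

(* E[e_i(t)/t]: the d hash functions are drawn independently and uniformly
   from the family, the stream Z(1..t) is IRM with popularities p. *)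
Definition expected_rel_err (R : realType) (N d w : nat) (H : finType)
    (hash : H -> 'I_N -> 'I_w) (p : 'I_N -> R) (i : 'I_N) (t : nat) : R :=
  (#|H| ^ d)%:R^-1 *
  \sum_(hs : {ffun 'I_d -> H}) \sum_(s : t.-tuple 'I_N)
     stream_prob p s * (cu_error R (fun r => hash (hs r)) s i / t%:R).

Definition A_term (R : realType) (N w : nat) (p : 'I_N -> R) (x : R) (k : nat) : R :=
  (\sum_(l : 'I_N | (k <= l)%N) p l) / ((w - k)%:R * x) + k%:R / w%:R.

Definition Acal (R : realType) (N w : nat) (p : 'I_N -> R) (x : R) : R :=
  if 0 < x then \big[Num.min/A_term w p x 0]_(k < w) A_term w p x k else 1.

Definition gamma (R : realType) (N d w : nat) (p : 'I_N -> R) (i j : 'I_N) : R :=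
  if (j <= i)%N then 1 else Num.min ((Acal w p (p i - p j)) ^+ (d - 1)) 1.

(* Main.v *)
Require Import Defs.
From HB Require Import structures.
From mathcomp Require Import all_boot all_order all_algebra.
From mathcomp Require Import reals.
From mathcomp Require Import ring lra zify.
Import Order.TTheory GRing.Theory Num.Theory.
Set Implicit Arguments. Unset Strict Implicit. Unset Printing Implicit Defensive.


Lemma bigmin_le_seq (I : eqType) (s : seq I) (F : I -> nat) x0 r :
  r \in s -> (\big[minn/x0]_(k <- s) F k <= F r)%N.
Proof.
elim: s => // a s IH; rewrite inE big_cons => /orP [/eqP -> | /IH H].
  exact: geq_minl.
exact: leq_trans (geq_minr _ _) H.
Qed.

Lemma rowmin_le d (f : 'I_d -> nat) r : (rowmin f <= f r)%N.
Proof. rewrite /rowmin; apply: bigmin_le_seq; exact: mem_index_enum. Qed.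

Lemma rowmin_ge d (f : 'I_d -> nat) n : (0 < d)%N ->
  (forall r, n <= f r)%N -> (n <= rowmin f)%N.
Proof.
move=> d0 H; rewrite /rowmin; apply: (big_ind (fun x => n <= x)%N).
- rewrite /rowmax; apply: (leq_trans (H (Ordinal d0))); exact: (@leq_bigmax _ f (Ordinal d0)).
- by move=> x y hx hy; rewrite leq_min hx hy.
- by move=> r _; exact: H.
Qed.

Lemma cu_counters_rcons N d w (hs : 'I_d -> 'I_N -> 'I_w) u z :
  cu_counters hs (rcons u z) = cu_update hs (cu_counters hs u) z.
Proof. by rewrite /cu_counters foldl_rcons. Qed.

Lemma inv1 N d w (hs : 'I_d -> 'I_N -> 'I_w) i u r : (0 < d)%N ->
  (count_mem i u <= cu_counters hs u r (hs r i))%N.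
Proof.
move=> d0; elim/last_ind: u r => [|u z IH] r; first by [].
rewrite cu_counters_rcons /cu_update -cats1 count_cat /= addn0.
case: eqP => [eq_zi|_]; last first.
  rewrite addn0; case: ifP => _ //; exact: leq_trans (IH r) (leq_maxl _ _).
subst z; rewrite eqxx addn1; apply: leq_trans (leq_maxr _ _) .
rewrite ltnS; apply: rowmin_ge => // f; exact: IH.
Qed.

Lemma inv2 N d w (hs : 'I_d -> 'I_N -> 'I_w) u r b :
  (cu_counters hs u r b <= count (fun y => hs r y == b) u)%N.
Proof.
elim/last_ind: u r b => [|u z IH] r b; first by [].
rewrite cu_counters_rcons /cu_update -cats1 count_cat /= addn0.
case: ifP => [/eqP eb|_]; last by apply: leq_trans (IH r b) (leq_addr _ _). 
rewrite {3}eb eqxx addn1 geq_max; apply/andP; split.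
  exact: leq_trans (IH r b) (leqnSn _).
rewrite ltnS; apply: leq_trans (rowmin_le _ r) _; rewrite -eb; exact: IH.
Qed.

Local Open Scope ring_scope.



Lemma step_nat N d w (hs : 'I_d -> 'I_N -> 'I_w) i r0 u z : (0 < d)%N ->
  let c := cu_counters hs u in let c' := cu_counters hs (rcons u z) in
  (c' r0 (hs r0 i) <= c r0 (hs r0 i) + (z == i))%N \/
  [/\ z != i, hs r0 z == hs r0 i,
     (forall r, count_mem i u <= count (fun y => hs r y == hs r z) u)%N &
     (c' r0 (hs r0 i) <= c r0 (hs r0 i) + 1)%N].
Proof.
move=> d0 c c'; rewrite /c' cu_counters_rcons /cu_update -/c.
set m := rowmin _.
case: eqP => [e|_]; last by left; exact: leq_addr.
have mle : (m <= c r0 (hs r0 i))%N by rewrite e; exact: rowmin_le.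
have H1 : (maxn (c r0 (hs r0 i)) m.+1 <= c r0 (hs r0 i) + 1)%N.
  by rewrite geq_max leq_addr addn1 ltnS mle.
case: (eqVneq z i) => [ezi|nzi]; first by left.
case: (ltnP m (c r0 (hs r0 i))) => [lt|ge].
  by left; rewrite addn0; move/maxn_idPl: lt => ->.
right; split => //; first by rewrite e.
move=> r; apply: leq_trans (inv1 hs i u r0 d0) _.
apply: leq_trans ge _; apply: leq_trans (rowmin_le _ r) _; exact: inv2.
Qed.

Definition Frow (R : realType) N w (i z : 'I_N) d (r0 : 'I_d) (u : seq 'I_N)
  (r : 'I_d) (f : 'I_N -> 'I_w) : R :=
  if r == r0 then (f z == f i)%:R
  else (count_mem i u <= count (fun y => f y == f z) u)%:R.

Definition badR (R : realType) N d w (hs : 'I_d -> 'I_N -> 'I_w) (i : 'I_N) (r0 : 'I_d)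
  (u : seq 'I_N) (z : 'I_N) : R :=
  (z != i)%:R * \prod_r Frow R i z r0 u r (hs r).

Lemma badR_ge0 (R : realType) N d w (hs : 'I_d -> 'I_N -> 'I_w) i r0 u z :
  0 <= badR R hs i r0 u z.
Proof.
apply: mulr_ge0; first exact: ler0n.
apply: prodr_ge0 => r _; rewrite /Frow; case: ifP => _; exact: ler0n.
Qed.

Lemma step_real (R : realType) N d w (hs : 'I_d -> 'I_N -> 'I_w) i r0 u z : (0 < d)%N ->
  ((cu_counters hs (rcons u z) r0 (hs r0 i))%:R : R) <=
  (cu_counters hs u r0 (hs r0 i))%:R + (z == i)%:R + badR R hs i r0 u z.
Proof.
move=> d0; case: (step_nat hs i r0 u z d0) => [H|[nzi coll cnt H]].
  have := badR_ge0 R hs i r0 u z.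
  have : ((cu_counters hs (rcons u z) r0 (hs r0 i))%:R : R) <=
    (cu_counters hs u r0 (hs r0 i))%:R + (z == i)%:R by rewrite -natrD ler_nat.
  lra.
have -> : badR R hs i r0 u z = 1.
  rewrite /badR nzi mul1r; apply: big1 => r _; rewrite /Frow.
  by case: eqP => [->|_]; [rewrite coll | rewrite cnt].
rewrite (negbTE nzi) addr0 -[1 in X in _ <= X]/(1%:R) -natrD ler_nat; exact: H.
Qed.

Fixpoint badc (R : realType) N d w (hs : 'I_d -> 'I_N -> 'I_w) (i : 'I_N) (r0 : 'I_d)
  (pre s : seq 'I_N) : R :=
  match s with
  | [::] => 0
  | z :: s' => badR R hs i r0 pre z + badc R hs i r0 (rcons pre z) s'
  end.

Lemma counter_badc (R : realType) N d w (hs : 'I_d -> 'I_N -> 'I_w) i r0 s pre :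
  (0 < d)%N ->
  ((cu_counters hs (pre ++ s) r0 (hs r0 i))%:R : R) <=
  (cu_counters hs pre r0 (hs r0 i))%:R + (count_mem i s)%:R + badc R hs i r0 pre s.
Proof.
move=> d0; elim: s pre => [|z s IH] pre /=; first by rewrite cats0 !addr0.
rewrite -cat_rcons; apply: le_trans (IH _) _.
rewrite natrD; have := step_real R hs i r0 pre z d0; lra.
Qed.

Lemma err_le_badc (R : realType) N d w (hs : 'I_d -> 'I_N -> 'I_w) i r0 s :
  (0 < d)%N -> cu_error R hs s i <= badc R hs i r0 [::] s.
Proof.
move=> d0; rewrite /cu_error /cu_estimate.
have := counter_badc R hs i r0 s [::] d0; rewrite cat0s.
have -> : cu_counters hs [::] r0 (hs r0 i) = 0%N by [].
have : ((rowmin (fun r => cu_counters hs s r (hs r i)))%:R : R) <=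
   (cu_counters hs s r0 (hs r0 i))%:R by rewrite ler_nat; exact: rowmin_le.
lra.
Qed.



Lemma sum_tuple_cons (V : nmodType) (T : finType) n (F : n.+1.-tuple T -> V) :
  \sum_(u : n.+1.-tuple T) F u =
  \sum_(x : T) \sum_(u : n.-tuple T) F [tuple of x :: u].
Proof.
rewrite pair_big /=.
rewrite (reindex (fun p : T * n.-tuple T => [tuple of p.1 :: p.2])) /=.
  by apply: eq_bigr => -[x u].
exists (fun t : n.+1.-tuple T => (thead t, [tuple of behead t])).
  by move=> [x u] _ /=; congr pair; apply: val_inj.
by move=> t _ /=; rewrite [in RHS](tuple_eta t).
Qed.

Lemma sum_tuple0 (V : nmodType) (T : finType) (F : 0.-tuple T -> V) :
  \sum_(u : 0.-tuple T) F u = F [tuple].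
Proof.
rewrite (eq_bigr (fun _ => F [tuple])) ?sumr_const; last by move=> u _; rewrite tuple0.
by rewrite card_tuple expn0.
Qed.

Lemma sum_tuple_prod (R : comPzRingType) (T : finType) n (F : T -> R) :
  \sum_(u : n.-tuple T) \prod_(x <- u) F x = (\sum_x F x) ^+ n.
Proof.
elim: n => [|n IH]; first by rewrite sum_tuple0 big_nil expr0.
rewrite sum_tuple_cons exprS -IH mulr_suml; apply: eq_bigr => x _.
rewrite mulr_sumr; apply: eq_bigr => u _; by rewrite big_cons.
Qed.

Lemma stream_prob_cons (R : realType) N (p : 'I_N -> R) x (u : seq 'I_N) :
  stream_prob p (x :: u) = p x * stream_prob p u.
Proof. by rewrite /stream_prob big_cons. Qed.

Lemma stream_prob_ge0 (R : realType) N (p : 'I_N -> R) u :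
  (forall j, 0 <= p j) -> 0 <= stream_prob p u.
Proof. move=> p0; apply: prodr_ge0 => x _; exact: p0. Qed.

Lemma sum_stream_prob (R : realType) N (p : 'I_N -> R) n :
  \sum_(j < N) p j = 1 -> \sum_(u : n.-tuple 'I_N) stream_prob p u = 1.
Proof. by move=> p1; rewrite /stream_prob sum_tuple_prod p1 expr1n. Qed.



Lemma unroll (R : realType) N d w (hs : 'I_d -> 'I_N -> 'I_w) i r0 (p : 'I_N -> R) :
  \sum_(j < N) p j = 1 -> forall t pre,
  \sum_(s : t.-tuple 'I_N) stream_prob p s * badc R hs i r0 pre s =
  \sum_(k < t) \sum_(u : k.-tuple 'I_N)
      stream_prob p u * \sum_z p z * badR R hs i r0 (pre ++ u) z.
Proof.
move=> p1; elim=> [|t IH] pre.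
  by rewrite sum_tuple0 big_ord0 /= mulr0.
rewrite sum_tuple_cons big_ord_recl sum_tuple0 /= cats0.
rewrite /stream_prob big_nil mul1r -/(stream_prob p _).
have -> : \sum_(i0 < t) \sum_(u : (bump 0 i0).-tuple 'I_N)
   stream_prob p u * (\sum_z p z * badR R hs i r0 (pre ++ u) z) =
   \sum_z p z * \sum_(k < t) \sum_(u : k.-tuple 'I_N)
      stream_prob p u * \sum_y p y * badR R hs i r0 (rcons pre z ++ u) y.
  under eq_bigr do rewrite sum_tuple_cons.
  rewrite exchange_big /=; apply: eq_bigr => z _.
  rewrite mulr_sumr; apply: eq_bigr => k _.
  rewrite mulr_sumr; apply: eq_bigr => u _ /=.
  by rewrite stream_prob_cons cat_rcons mulrA.
rewrite -big_split /=; apply: eq_bigr => z _.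
rewrite -IH mulr_sumr.
have sp := sum_stream_prob t p1.
transitivity (\sum_(u : t.-tuple 'I_N) (p z * badR R hs i r0 pre z * stream_prob p u +
   p z * (stream_prob p u * badc R hs i r0 (rcons pre z) u))).
  by apply: eq_bigr => u _ /=; rewrite big_cons -/(stream_prob p u); ring.
by rewrite big_split /= -mulr_sumr sp mulr1.
Qed.



Lemma sum_ind_card (R : realType) (H : finType) (P : pred H) :
  \sum_h ((P h)%:R : R) = #|[pred h | P h]|%:R.
Proof.
rewrite (eq_bigr (fun h => if P h then 1 else 0)) => [|h _]; last by case: (P h).
by rewrite -big_mkcond /= sumr_const.
Qed.

Lemma coll_prob (R : realType) N w (H : finType) (hash : H -> 'I_N -> 'I_w) a b :
  pairwise_indep R hash -> a != b -> (0 < #|H|)%N -> (0 < w)%N ->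
  #|H|%:R^-1 * \sum_h ((hash h a == hash h b)%:R : R) = w%:R^-1.
Proof.
move=> hp ab H0 w0.
have -> : \sum_h ((hash h a == hash h b)%:R : R) =
   \sum_(c : 'I_w) \sum_h (((hash h a == c) && (hash h b == c))%:R : R).
  rewrite exchange_big /=; apply: eq_bigr => h _.
  rewrite (bigD1 (hash h a)) //= eqxx /= big1 ?addr0; first by rewrite eq_sym.
  by move=> c /negbTE nc; rewrite eq_sym nc.
have Hn : (#|H|%:R : R) != 0 by rewrite pnatr_eq0 -lt0n.
have wn : (w%:R : R) != 0 by rewrite pnatr_eq0 -lt0n.
have -> : \sum_(c : 'I_w) \sum_h (((hash h a == c) && (hash h b == c))%:R : R) =
    \sum_(c : 'I_w) (#|H|%:R / (w ^ 2)%:R).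
  apply: eq_bigr => c _; rewrite sum_ind_card.
  have := hp a b ab c c; move=> E.
  have -> : (#|H|%:R : R) / (w ^ 2)%:R = (#|H|%:R * (1 / (w ^ 2)%:R)) by rewrite mul1r.
  by rewrite -E mulrC mulfVK.
rewrite sumr_const card_ord natrX -mulr_natr; field; by rewrite Hn wn.
Qed.

Lemma hash_avg (R : realType) N d w (H : finType) (hash : H -> 'I_N -> 'I_w) i r0 u z :
  (#|H| ^ d)%:R^-1 * \sum_(hs : {ffun 'I_d -> H}) badR R (fun r => hash (hs r)) i r0 u z
  = (z != i)%:R * \prod_r (#|H|%:R^-1 * \sum_h Frow R i z r0 u r (hash h)).
Proof.
rewrite /badR -mulr_sumr mulrCA; congr (_ * _).
rewrite -(bigA_distr_bigA (fun r h => Frow R i z r0 u r (hash h))) /=.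
have -> : (#|H| ^ d)%:R^-1 = \prod_(r < d) (#|H|%:R^-1 : R).
  by rewrite prodr_const card_ord natrX exprVn.
by rewrite -big_split /=.
Qed.

Definition aprob (R : realType) N w (H : finType) (hash : H -> 'I_N -> 'I_w) (i : 'I_N)
  (u : seq 'I_N) (z : 'I_N) : R :=
  #|H|%:R^-1 * \sum_h (count_mem i u <= count (fun y => hash h y == hash h z) u)%:R.

Lemma prod_eval (R : realType) N d w (H : finType) (hash : H -> 'I_N -> 'I_w) i (r0 : 'I_d) u z :
  pairwise_indep R hash -> z != i -> (0 < #|H|)%N -> (0 < w)%N ->
  \prod_r (#|H|%:R^-1 * \sum_h Frow R i z r0 u r (hash h)) =
  w%:R^-1 * aprob R hash i u z ^+ (d - 1).
Proof.
move=> hp zi H0 w0; rewrite (bigD1 r0) //=; congr (_ * _).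
  rewrite /Frow eqxx; exact: coll_prob.
rewrite (eq_bigr (fun _ => aprob R hash i u z)); last first.
  by move=> r /negbTE rn; rewrite /Frow rn.
rewrite prodr_const; congr (_ ^+ _).
have := cardC1 r0; rewrite card_ord subn1 => <-.
by apply: eq_card => r; rewrite !inE.
Qed.



Lemma pow_split (R : realType) (a q b : R) n :
  0 <= a <= 1 -> 0 <= q <= 1 -> 0 <= b -> a <= q + b ->
  a ^+ n <= q ^+ n + n%:R * b.
Proof.
move=> /andP [a0 a1] /andP [q0 q1] b0 aqb; elim: n => [|n IH].
  by rewrite !expr0 mul0r addr0.
rewrite !exprS.
have qn0 : 0 <= q ^+ n by exact: exprn_ge0.
have qn1 : q ^+ n <= 1 by exact: exprn_ile1.
have an0 : 0 <= a ^+ n by exact: exprn_ge0.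
have h1 : a * a ^+ n <= a * (q ^+ n + n%:R * b) by exact: ler_wpM2l.
have h2 : a * (n%:R * b) <= n%:R * b.
  by rewrite -[X in _ <= X]mul1r ler_wpM2r // mulr_ge0 // ler0n.
have h3 : a * q ^+ n <= (q + b) * q ^+ n by exact: ler_wpM2r.
rewrite -natr1; nra.
Qed.

Definition mass (R : realType) N w (H : finType) (hash : H -> 'I_N -> 'I_w) (p : 'I_N -> R)
  (h : H) (z : 'I_N) : R := \sum_(l | hash h l == hash h z) p l.

Definition qprob (R : realType) N w (H : finType) (hash : H -> 'I_N -> 'I_w) (p : 'I_N -> R)
  (i z : 'I_N) : R := #|H|%:R^-1 * \sum_h (p i <= mass hash p h z)%R%:R.

Definition bprob (R : realType) N w (H : finType) (hash : H -> 'I_N -> 'I_w) (p : 'I_N -> R)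
  (i : 'I_N) (u : seq 'I_N) (z : 'I_N) : R :=
  #|H|%:R^-1 * \sum_h ((mass hash p h z < p i)%R%:R *
     (count_mem i u <= count (fun y => hash h y == hash h z) u)%:R).

Lemma avg_bounds (R : realType) (H : finType) (f : H -> R) :
  (0 < #|H|)%N -> (forall h, 0 <= f h <= 1) ->
  0 <= #|H|%:R^-1 * \sum_h f h <= 1.
Proof.
move=> H0 fb; have Hp : (0 : R) < #|H|%:R by rewrite ltr0n.
apply/andP; split.
  apply: mulr_ge0; first by rewrite invr_ge0 ltW.
  by apply: sumr_ge0 => h _; case/andP: (fb h).
rewrite ler_pdivrMl // mulr1.
have : \sum_h f h <= \sum_(h : H) (1 : R) by apply: ler_sum => h _; case/andP: (fb h).
by rewrite sumr_const -[_ *+ _]mulr_natl mulr1.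
Qed.

Lemma ind01 (R : realType) (b : bool) : 0 <= (b%:R : R) <= 1.
Proof. by case: b; rewrite ?ler01 ?lexx. Qed.

Lemma a_le_qb (R : realType) N w (H : finType) (hash : H -> 'I_N -> 'I_w) (p : 'I_N -> R)
  i u z : (0 < #|H|)%N ->
  aprob R hash i u z <= qprob hash p i z + bprob hash p i u z.
Proof.
move=> H0; rewrite /aprob /qprob /bprob -mulrDr ler_wpM2l //.
  by rewrite invr_ge0 ler0n.
rewrite -big_split /=; apply: ler_sum => h _.
case: (ltP (mass hash p h z) (p i)) => _ /=.
  by rewrite mul1r ler_wpDl.
by rewrite mul0r addr0; case: (_ <= _)%N; rewrite ?lexx ?ler01.
Qed.

Lemma a_pow_bound (R : realType) N w (H : finType) (hash : H -> 'I_N -> 'I_w) (p : 'I_N -> R)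
  i u z n : (0 < #|H|)%N ->
  aprob R hash i u z ^+ n <= qprob hash p i z ^+ n + n%:R * bprob hash p i u z.
Proof.
move=> H0; apply: pow_split.
- by apply: avg_bounds => // h; exact: ind01.
- by apply: avg_bounds => // h; exact: ind01.
- case/andP: (avg_bounds H0 (fun h => ind01 R ((mass hash p h z < p i)%R &&
     (count_mem i u <= count (fun y => hash h y == hash h z) u)%N))) => + _.
  rewrite /bprob; congr (_ <= _ * _); apply: eq_bigr => h _.
  by case: (_ < _)%R; case: (_ <= _)%N; rewrite ?mul1r ?mul0r.
- exact: a_le_qb.
Qed.



Lemma prod_ratio (R : realType) N (th : R) (P Q : pred 'I_N) (u : seq 'I_N) :
  th != 0 ->
  \prod_(x <- u) (th ^+ P x / th ^+ Q x) = th ^+ count P u / th ^+ count Q u.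
Proof.
move=> th0; elim: u => [|x u IH]; first by rewrite big_nil !expr0 divr1.
rewrite big_cons IH /= !exprD invfM; by rewrite mulrACA.
Qed.

Lemma ind_le_ratio (R : realType) (th : R) (a b : nat) :
  1 <= th -> ((b <= a)%N%:R : R) <= th ^+ a / th ^+ b.
Proof.
move=> th1; have thp : 0 < th by apply: lt_le_trans th1; exact: ltr01.
have pb : 0 < th ^+ b by exact: exprn_gt0.
case: leqP => ba /=.
  rewrite ler_pdivlMr // mul1r; exact: ler_weXn2l.
by apply: divr_ge0; apply: exprn_ge0; exact: ltW.
Qed.

Lemma geom_bound (R : realType) (r : R) t : 0 <= r < 1 ->
  \sum_(k < t) r ^+ k <= (1 - r)^-1.
Proof.
move=> /andP [r0 r1].
have E : (1 - r) * \sum_(k < t) r ^+ k = 1 - r ^+ t.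
  elim: t => [|t IH]; first by rewrite big_ord0 expr0 mulr0 subrr.
  rewrite big_ord_recr /= mulrDr IH exprS; ring.
have pr : 0 < 1 - r by rewrite subr_gt0.
rewrite -[X in X <= _](mulKf (lt0r_neq0 pr)) E.
rewrite -[X in _ <= X]mulr1; apply: ler_wpM2l; first by rewrite invr_ge0 ltW.
have := exprn_ge0 t r0; lra.
Qed.


Definition rho (R : realType) N w (H : finType) (hash : H -> 'I_N -> 'I_w) (p : 'I_N -> R)
  (i : 'I_N) (h : H) (z : 'I_N) : R :=
  let th := 1 + (p i - mass hash p h z) in
  \sum_x p x * (th ^+ (hash h x == hash h z) / th ^+ (x == i)).

Lemma chernoff (R : realType) N w (H : finType) (hash : H -> 'I_N -> 'I_w) (p : 'I_N -> R)
  i h z k :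
  (forall j, 0 <= p j) -> mass hash p h z < p i ->
  \sum_(u : k.-tuple 'I_N) stream_prob p u *
     (count_mem i u <= count (fun y => hash h y == hash h z) u)%N%:R
  <= rho hash p i h z ^+ k.
Proof.
move=> p0 lt; set th := 1 + (p i - mass hash p h z).
have th1 : 1 <= th by rewrite /th lerDl subr_ge0 ltW.
have th0 : th != 0 by apply: lt0r_neq0; apply: lt_le_trans th1; exact: ltr01.
rewrite /rho -/th -sum_tuple_prod; apply: ler_sum => u _.
rewrite /stream_prob big_split /=.
apply: ler_wpM2l; first by apply: prodr_ge0 => x _; exact: p0.
rewrite (@prod_ratio _ _ th (fun x => hash h x == hash h z) (pred1 i)) //.
exact: ind_le_ratio.
Qed.

Lemma p_le1 (R : realType) N (p : 'I_N -> R) j :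
  (forall j, 0 <= p j) -> \sum_(j < N) p j = 1 -> p j <= 1.
Proof.
move=> p0 p1; rewrite -p1 (bigD1 j) //= lerDl; apply: sumr_ge0 => l _; exact: p0.
Qed.

Lemma mass_sum (R : realType) N w (H : finType) (hash : H -> 'I_N -> 'I_w) (p : 'I_N -> R) h z :
  mass hash p h z = \sum_l p l * (hash h l == hash h z)%:R.
Proof.
rewrite /mass big_mkcond /=; apply: eq_bigr => l _.
by case: (_ == _); rewrite ?mulr1 ?mulr0.
Qed.

Lemma mass_ge (R : realType) N w (H : finType) (hash : H -> 'I_N -> 'I_w) (p : 'I_N -> R) h z l :
  (forall j, 0 <= p j) -> hash h l == hash h z -> p l <= mass hash p h z.
Proof.
move=> p0 hl; rewrite /mass (bigD1 l) //= lerDl; apply: sumr_ge0 => m _; exact: p0.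
Qed.

Lemma rho_bounds (R : realType) N w (H : finType) (hash : H -> 'I_N -> 'I_w) (p : 'I_N -> R)
  i h z :
  (forall j, 0 <= p j) -> \sum_(j < N) p j = 1 -> mass hash p h z < p i ->
  0 <= rho hash p i h z < 1.
Proof.
move=> p0 p1 lt.
set C := mass hash p h z; set d := p i - C.
have dp : 0 < d by rewrite subr_gt0.
have th0 : (1 + d) != 0 by apply: lt0r_neq0; lra.
have thp : 0 < 1 + d by lra.
have nic : (hash h i == hash h z) = false.
  by apply/negP => /(mass_ge p0); rewrite leNgt lt.
have E : rho hash p i h z = 1 + d * C + ((1 + d)^-1 - 1) * p i.
  rewrite /rho -/C -/d.
  have -> : \sum_x p x * ((1 + d) ^+ (hash h x == hash h z) / (1 + d) ^+ (x == i)) =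
     \sum_x (p x + d * (p x * (hash h x == hash h z)%:R) +
        ((1 + d)^-1 - 1) * (p x * (x == i)%:R)).
    apply: eq_bigr => x _.
    case: (eqVneq x i) => [->|xi]; first by rewrite nic /=; rewrite expr0 expr1 div1r; ring.
    by case: (_ == _); rewrite /= ?expr0 ?expr1 ?divr1; ring.
  rewrite !big_split /= -!mulr_sumr p1 -mass_sum -/C; congr (_ + _ * _).
  rewrite (bigD1 i) //= eqxx mulr1 big1 ?addr0 // => x /negbTE ->; by rewrite mulr0.
apply/andP; split.
  rewrite /rho; apply: sumr_ge0 => x _; apply: mulr_ge0 => //.
  apply: divr_ge0; apply: exprn_ge0; lra.
rewrite E.
have C0 : 0 <= C by rewrite /C /mass; apply: sumr_ge0 => l _; exact: p0.
have dE : d = p i - C by [].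
have pi1 := p_le1 i p0 p1.
have ltC : C < p i by [].
clearbody d C.
have C1 : C < 1 by lra.
have -> : (1 + d)^-1 - 1 = - d / (1 + d) by field.
have -> : p i = C + d by rewrite dE; ring.
have key : d * C * (1 + d) < d * (C + d).
  have hh : 0 < d * d * (1 - C) by rewrite !mulr_gt0 // subr_gt0.
  rewrite -subr_gt0; have -> : d * (C + d) - d * C * (1 + d) = d * d * (1 - C) by ring.
  exact: hh.
rewrite -subr_lt0.
have -> : 1 + d * C + - d / (1 + d) * (C + d) - 1 = (d * C * (1 + d) - d * (C + d)) / (1 + d).
  by field.
by rewrite pmulr_llt0 ?invr_gt0 // subr_lt0.
Qed.

Definition Kc (R : realType) N w (H : finType) (hash : H -> 'I_N -> 'I_w) (p : 'I_N -> R)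
  (i z : 'I_N) : R :=
  #|H|%:R^-1 * \sum_h (if mass hash p h z < p i then (1 - rho hash p i h z)^-1 else 0).

Lemma Kc_ge0 (R : realType) N w (H : finType) (hash : H -> 'I_N -> 'I_w) (p : 'I_N -> R) i z :
  (forall j, 0 <= p j) -> \sum_(j < N) p j = 1 -> 0 <= Kc hash p i z.
Proof.
move=> p0 p1; apply: mulr_ge0; first by rewrite invr_ge0 ler0n.
apply: sumr_ge0 => h _; case: ifP => // lt.
have /andP [_ r1] := rho_bounds p0 p1 lt; rewrite invr_ge0; lra.
Qed.

Lemma bsum (R : realType) N w (H : finType) (hash : H -> 'I_N -> 'I_w) (p : 'I_N -> R) i z t :
  (forall j, 0 <= p j) -> \sum_(j < N) p j = 1 ->
  \sum_(k < t) \sum_(u : k.-tuple 'I_N) stream_prob p u * bprob hash p i u z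
  <= Kc hash p i z.
Proof.
move=> p0 p1.
have -> : \sum_(k < t) \sum_(u : k.-tuple 'I_N) stream_prob p u * bprob hash p i u z =
  #|H|%:R^-1 * \sum_h \sum_(k < t) \sum_(u : k.-tuple 'I_N) stream_prob p u *
      ((mass hash p h z < p i)%R%:R *
       (count_mem i u <= count (fun y => hash h y == hash h z) u)%N%:R).
  symmetry; rewrite mulr_sumr; under eq_bigr do rewrite mulr_sumr.
  rewrite exchange_big /=; apply: eq_bigr => k _.
  under eq_bigr do rewrite mulr_sumr.
  rewrite exchange_big /=; apply: eq_bigr => u _.
  rewrite /bprob mulr_sumr mulr_sumr; apply: eq_bigr => h _; ring.
rewrite /Kc; apply: ler_wpM2l; first by rewrite invr_ge0 ler0n.
apply: ler_sum => h _; case: ifP => lt /=; last first.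
  by rewrite big1 // => k _; rewrite big1 // => u _; rewrite mul0r mulr0.
apply: le_trans (geom_bound t (rho_bounds p0 p1 lt)).
apply: ler_sum => k _.
apply: (le_trans _ (chernoff k p0 lt)); apply: ler_sum => u _.
by rewrite mul1r.
Qed.



Lemma card_lt_k N k (z : 'I_N) :
  (#|[pred l : 'I_N | (l != z) && (l < k)%N]| <= k)%N.
Proof.
rewrite cardE -(size_map val).
suff : (size (map val (enum [pred l : 'I_N | (l != z) && (l < k)%N])) <= size (iota 0 k))%N.
  by rewrite size_iota.
apply: uniq_leq_size; first by rewrite map_inj_uniq ?enum_uniq //; exact: val_inj.
move=> x /mapP [l]; rewrite mem_enum inE => /andP [_ lk] ->.
by rewrite mem_iota.
Qed.

Lemma markov_point (R : realType) N w (H : finType) (hash : H -> 'I_N -> 'I_w) (p : 'I_N -> R)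
  i z k h :
  (forall j, 0 <= p j) -> \sum_(j < N) p j = 1 -> 0 < p i - p z ->
  (p i <= mass hash p h z)%R%:R <=
  \sum_(l | (l != z) && (l < k)%N) ((hash h l == hash h z)%:R : R) +
  (\sum_(l | (l != z) && ~~ (l < k)%N) p l * (hash h l == hash h z)%:R) / (p i - p z).
Proof.
move=> p0 p1 xp.
set S := \sum_(l | _) _; set T := \sum_(l | _) _.
have S0 : 0 <= S by apply: sumr_ge0 => l _; exact: ler0n.
have T0 : 0 <= T by apply: sumr_ge0 => l _; apply: mulr_ge0 => //; exact: ler0n.
have Tx : 0 <= T / (p i - p z) by apply: divr_ge0 => //; exact: ltW.
case: (boolP [exists l, [&& l != z, (l < k)%N & hash h l == hash h z]]).
  case/existsP => l0 /and3P [l0z l0k c0].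
  have : 1 <= S by rewrite /S (bigD1 l0) ?l0z ?l0k //= c0 lerDl; apply: sumr_ge0 => l _; exact: ler0n.
  have := ind01 R (p i <= mass hash p h z)%R; lra.
move=> /existsPn nex.
case: (boolP (p i <= mass hash p h z)%R) => le /=; last by lra.
have Em : mass hash p h z = p z + T.
  rewrite mass_sum (bigD1 z) //= eqxx mulr1; congr (_ + _).
  rewrite (bigID (fun l : 'I_N => (l < k)%N)) /= big1 ?add0r //.
  move=> l /andP [lz lk]; have := nex l; rewrite lz lk /= => /negbTE ->; by rewrite mulr0.
have : p i - p z <= T by rewrite Em in le; lra.
move=> h1; have : 1 <= T / (p i - p z) by rewrite ler_pdivlMr // mul1r.
lra.
Qed.

Lemma q_le_Aterm (R : realType) N w (H : finType) (hash : H -> 'I_N -> 'I_w) (p : 'I_N -> R)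
  i z k :
  pairwise_indep R hash -> (0 < #|H|)%N -> (0 < w)%N -> (k < w)%N ->
  (forall j, 0 <= p j) -> \sum_(j < N) p j = 1 -> 0 < p i - p z ->
  qprob hash p i z <= A_term w p (p i - p z) k.
Proof.
move=> hp H0 w0 kw p0 p1 xp; set x := p i - p z.
have Hinv : 0 <= (#|H|%:R : R)^-1 by rewrite invr_ge0 ler0n.
have wp : (0 : R) < w%:R by rewrite ltr0n.
have step : qprob hash p i z <= #|H|%:R^-1 * \sum_h (
  \sum_(l | (l != z) && (l < k)%N) ((hash h l == hash h z)%:R : R) +
  (\sum_(l | (l != z) && ~~ (l < k)%N) p l * (hash h l == hash h z)%:R) / x).
  rewrite /qprob; apply: ler_wpM2l => //; apply: ler_sum => h _.
  exact: markov_point.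
apply: le_trans step _.
rewrite big_split /= mulrDr -mulr_suml mulrA.
have eS : #|H|%:R^-1 * \sum_h \sum_(l | (l != z) && (l < k)%N) ((hash h l == hash h z)%:R : R)
   = \sum_(l | (l != z) && (l < k)%N) w%:R^-1.
  rewrite exchange_big mulr_sumr; apply: eq_bigr => l /andP [lz _].
  exact: coll_prob.
have eT : #|H|%:R^-1 * \sum_h \sum_(l | (l != z) && ~~ (l < k)%N) p l * (hash h l == hash h z)%:R
   = \sum_(l | (l != z) && ~~ (l < k)%N) p l * w%:R^-1.
  rewrite exchange_big mulr_sumr; apply: eq_bigr => l /andP [lz _].
  by rewrite -mulr_sumr mulrCA coll_prob.
rewrite eS eT /A_term.
rewrite [X in _ <= X]addrC; apply: lerD.
  rewrite sumr_const -[_ *+ _]mulr_natr mulrC; apply: ler_wpM2r; first by rewrite invr_ge0 ler0n.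
  by rewrite ler_nat card_lt_k.
rewrite -mulr_suml.
have wk : (0 : R) < (w - k)%N%:R by rewrite ltr0n subn_gt0.
have wkw : ((w - k)%N%:R : R) <= w%:R by rewrite ler_nat leq_subr.
have Ssub : \sum_(l | (l != z) && ~~ (l < k)%N) p l <= \sum_(l : 'I_N | (k <= l)%N) p l.
  rewrite [X in _ <= X](bigID (fun l => l != z)) /= -[X in X <= _]addr0.
  apply: lerD; last by apply: sumr_ge0 => l _; exact: p0.
  rewrite le_eqVlt; apply/orP; left; apply/eqP; apply: eq_bigl => l; by rewrite -leqNgt andbC.
have Sg0 : 0 <= \sum_(l | (l != z) && ~~ (l < k)%N) p l by apply: sumr_ge0 => l _; exact: p0.
rewrite -mulrA -invfM.
have wxp : (0 : R) < w%:R * x by rewrite mulr_gt0.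
have wkxp : (0 : R) < (w - k)%N%:R * x by rewrite mulr_gt0.
apply: ler_pM => //; first by rewrite invr_ge0 ltW.
rewrite lef_pV2 ?posrE //.
by rewrite ler_wpM2r // ltW.
Qed.

Lemma q_bounds (R : realType) N w (H : finType) (hash : H -> 'I_N -> 'I_w) (p : 'I_N -> R) i z :
  (0 < #|H|)%N -> 0 <= qprob hash p i z <= 1.
Proof. by move=> H0; apply: avg_bounds => // h; exact: ind01. Qed.

Lemma q_pow_le_gamma (R : realType) N d w (H : finType) (hash : H -> 'I_N -> 'I_w)
  (p : 'I_N -> R) i z :
  pairwise_indep R hash -> (0 < #|H|)%N -> (0 < w)%N ->
  (forall j, 0 <= p j) -> \sum_(j < N) p j = 1 ->
  (forall j k : 'I_N, (j <= k)%N -> p k <= p j) ->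
  qprob hash p i z ^+ (d - 1) <= gamma d w p i z.
Proof.
move=> hp H0 w0 p0 p1 mono.
have /andP [q0 q1] := q_bounds hash p i z H0.
have qn1 : qprob hash p i z ^+ (d - 1) <= 1 by exact: exprn_ile1.
rewrite /gamma; case: ifP => // zi.
rewrite /Acal; case: ifP => xp; last by rewrite expr1n le_min qn1.
have qA : qprob hash p i z <= \big[Num.min/A_term w p (p i - p z) 0]_(k < w) A_term w p (p i - p z) k.
  apply: (big_ind (fun y => qprob hash p i z <= y)).
  - exact: q_le_Aterm.
  - by move=> a b ha hb; rewrite le_min ha hb.
  - by move=> k _; apply: q_le_Aterm.
rewrite le_min qn1 andbT; apply: lerXn2r => //; rewrite ?nnegrE //.
exact: le_trans qA.
Qed.



Lemma exp_step1 (R : realType) N d w (H : finType) (hash : H -> 'I_N -> 'I_w) (p : 'I_N -> R)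
  i (r0 : 'I_d) t :
  (0 < d)%N -> (forall j, 0 <= p j) -> (0 < t)%N ->
  expected_rel_err d hash p i t <=
  (#|H| ^ d)%:R^-1 * \sum_(hs : {ffun 'I_d -> H}) \sum_(s : t.-tuple 'I_N)
     stream_prob p s * (badc R (fun r => hash (hs r)) i r0 [::] s / t%:R).
Proof.
move=> d0 p0 t0; rewrite /expected_rel_err; apply: ler_wpM2l.
  by rewrite invr_ge0 ler0n.
apply: ler_sum => hs _; apply: ler_sum => s _.
apply: ler_wpM2l; first exact: stream_prob_ge0.
apply: ler_wpM2r; first by rewrite invr_ge0 ler0n.
exact: err_le_badc.
Qed.

Lemma exp_step2 (R : realType) N d w (H : finType) (hash : H -> 'I_N -> 'I_w) (p : 'I_N -> R)
  i (r0 : 'I_d) t :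
  \sum_(j < N) p j = 1 ->
  (#|H| ^ d)%:R^-1 * \sum_(hs : {ffun 'I_d -> H}) \sum_(s : t.-tuple 'I_N)
     stream_prob p s * (badc R (fun r => hash (hs r)) i r0 [::] s / t%:R)
  = t%:R^-1 * \sum_(k < t) \sum_(u : k.-tuple 'I_N) stream_prob p u *
      \sum_z p z * ((#|H| ^ d)%:R^-1 *
         \sum_(hs : {ffun 'I_d -> H}) badR R (fun r => hash (hs r)) i r0 u z).
Proof.
move=> p1.
have -> : \sum_(hs : {ffun 'I_d -> H}) \sum_(s : t.-tuple 'I_N)
     stream_prob p s * (badc R (fun r => hash (hs r)) i r0 [::] s / t%:R) =
  \sum_(hs : {ffun 'I_d -> H}) t%:R^-1 * \sum_(k < t) \sum_(u : k.-tuple 'I_N)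
      stream_prob p u * \sum_z p z * badR R (fun r => hash (hs r)) i r0 u z.
  apply: eq_bigr => hs _.
  rewrite -(unroll (fun r => hash (hs r)) i r0 p1 t [::]) mulr_sumr.
  apply: eq_bigr => s _; ring.
rewrite mulr_sumr.
under eq_bigr => hs _ do rewrite mulrCA mulr_sumr.
rewrite -mulr_sumr; congr (_ * _).
rewrite exchange_big; apply: eq_bigr => k _ /=.
under eq_bigr => hs _ do rewrite mulr_sumr.
rewrite exchange_big; apply: eq_bigr => u _ /=.
under eq_bigr => hs _ do rewrite mulrCA mulr_sumr mulr_sumr.
rewrite exchange_big mulr_sumr; apply: eq_bigr => z _ /=.
rewrite !mulr_sumr; apply: eq_bigr => hs _; ring.
Qed.

Lemma inner_le (R : realType) N d w (H : finType) (hash : H -> 'I_N -> 'I_w) (p : 'I_N -> R)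
  i (r0 : 'I_d) u z :
  pairwise_indep R hash -> (0 < #|H|)%N -> (0 < w)%N ->
  (#|H| ^ d)%:R^-1 * \sum_(hs : {ffun 'I_d -> H}) badR R (fun r => hash (hs r)) i r0 u z
  <= (z != i)%:R * (w%:R^-1 * (qprob hash p i z ^+ (d - 1) +
        (d - 1)%:R * bprob hash p i u z)).
Proof.
move=> hp H0 w0; rewrite hash_avg.
case: (eqVneq z i) => [->|zi]; first by rewrite /= !mul0r.
rewrite (prod_eval _ _ hp zi H0 w0) /= !mul1r.
apply: ler_wpM2l; first by rewrite invr_ge0 ler0n.
exact: a_pow_bound.
Qed.

Theorem theorem1 (R : realType) (N d w : nat) (H : finType)
    (hash : H -> 'I_N -> 'I_w) (p : 'I_N -> R) :
  (0 < d)%N -> (0 < w)%N -> (0 < #|H|)%N ->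
  pairwise_indep R hash ->
  (forall j, 0 <= p j) -> \sum_(j < N) p j = 1 ->
  (forall j k : 'I_N, (j <= k)%N -> p k <= p j) ->
  forall i : 'I_N, exists B : R, 0 <= B /\
    forall t : nat, (0 < t)%N ->
      expected_rel_err d hash p i t
        <= w%:R^-1 * (\sum_(j < N | j != i) p j * gamma d w p i j) + B / t%:R.
Proof.
move=> d0 w0 H0 hp p0 p1 mono i.
pose r0 : 'I_d := Ordinal d0.
have winv : 0 <= (w%:R : R)^-1 by rewrite invr_ge0 ler0n.
pose Q := \sum_z p z * ((z != i)%:R * (w%:R^-1 * qprob hash p i z ^+ (d - 1))).
pose B := \sum_z p z * ((z != i)%:R * (w%:R^-1 * ((d - 1)%:R * Kc hash p i z))).
exists B; split.
  apply: sumr_ge0 => z _; apply: mulr_ge0 => //; apply: mulr_ge0; first exact: ler0n.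
  apply: mulr_ge0 => //; apply: mulr_ge0; first exact: ler0n.
  exact: Kc_ge0.
move=> t t0.
have tp : (0 : R) < t%:R by rewrite ltr0n.
have main : expected_rel_err d hash p i t <= Q + B / t%:R.
  apply: le_trans (exp_step1 hash i r0 d0 p0 t0) _.
  rewrite (exp_step2 hash i r0 t p1).
  have S1 : \sum_(k < t) \sum_(u : k.-tuple 'I_N) stream_prob p u *
      \sum_z p z * ((#|H| ^ d)%:R^-1 *
         \sum_(hs : {ffun 'I_d -> H}) badR R (fun r => hash (hs r)) i r0 u z)
    <= \sum_(k < t) \sum_(u : k.-tuple 'I_N) stream_prob p u *
      \sum_z p z * ((z != i)%:R * (w%:R^-1 * (qprob hash p i z ^+ (d - 1) +
        (d - 1)%:R * bprob hash p i u z))).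
    apply: ler_sum => k _; apply: ler_sum => u _.
    apply: ler_wpM2l; first exact: stream_prob_ge0.
    apply: ler_sum => z _; apply: ler_wpM2l => //; exact: inner_le.
  have S2 : \sum_(k < t) \sum_(u : k.-tuple 'I_N) stream_prob p u *
      \sum_z p z * ((z != i)%:R * (w%:R^-1 * (qprob hash p i z ^+ (d - 1) +
        (d - 1)%:R * bprob hash p i u z)))
    = t%:R * Q + \sum_z p z * ((z != i)%:R * (w%:R^-1 * ((d - 1)%:R *
        \sum_(k < t) \sum_(u : k.-tuple 'I_N) stream_prob p u * bprob hash p i u z))).
    transitivity (\sum_(k < t) (Q + \sum_z \sum_(u : k.-tuple 'I_N) stream_prob p u *
        (p z * ((z != i)%:R * (w%:R^-1 * ((d - 1)%:R * bprob hash p i u z)))))).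
      apply: eq_bigr => k _.
      transitivity (\sum_(u : k.-tuple 'I_N) (stream_prob p u * Q + \sum_z stream_prob p u *
        (p z * ((z != i)%:R * (w%:R^-1 * ((d - 1)%:R * bprob hash p i u z)))))).
        apply: eq_bigr => u _; rewrite /Q mulr_sumr mulr_sumr -big_split /=.
        by apply: eq_bigr => z _; ring.
      rewrite big_split /= -mulr_suml sum_stream_prob // mul1r; congr (_ + _).
      exact: exchange_big.
    rewrite big_split /= sumr_const card_ord -[_ *+ _]mulr_natl; congr (_ + _).
    rewrite exchange_big; apply: eq_bigr => z _ /=.
    rewrite !mulr_sumr; apply: eq_bigr => k _.
    rewrite !mulr_sumr; apply: eq_bigr => u _; ring.
  have S3 : \sum_z p z * ((z != i)%:R * (w%:R^-1 * ((d - 1)%:R *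
        \sum_(k < t) \sum_(u : k.-tuple 'I_N) stream_prob p u * bprob hash p i u z)))
      <= B.
    apply: ler_sum => z _; apply: ler_wpM2l => //; apply: ler_wpM2l; first exact: ler0n.
    apply: ler_wpM2l => //; apply: ler_wpM2l; first exact: ler0n.
    exact: bsum.
  have tinv : (0 : R) <= t%:R^-1 by rewrite invr_ge0 ltW.
  have := ler_wpM2l tinv S1; rewrite S2 => S4.
  apply: le_trans S4 _.
  rewrite mulrDr mulrA mulVf ?gt_eqF // mul1r lerD2l mulrC.
  apply: ler_wpM2r => //; by rewrite invr_ge0 ltW.
apply: le_trans main _; rewrite lerD2r /Q mulr_sumr [X in _ <= X]big_mkcond /=.
apply: ler_sum => z _; case: (eqVneq z i) => [->|zi] /=; first by rewrite !mul0r mulr0.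
rewrite mul1r mulrCA; apply: ler_wpM2l => //; apply: ler_wpM2l => //.
exact: q_pow_le_gamma.
Qed.
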